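(* Let $V$ be an $n$-dimensional vector space over a field of characteristic zero, and let $A^{a_1\dots a_p}$ and $B_{a_1\dots a_p}$ be $p$-forms with $A$ simple. Let $P^a{}_b=A^{ac_2\dots c_p}B_{bc_2\dots c_p}$ and $T=T^a{}_b\{A,B\}=P-\frac{1}{2p}[P]$. Then $$T^2=\frac{1}{(2p)^2}[P]^2,$$ which, if $n\neq 2p$, can be written as $$T^2=\frac{1}{(n-2p)^2}[T]^2.$$
   Context: Index-free notation for $(1,1)$-tensors: products denote composition, $[X]=X^c{}_c$ is the trace, and a scalar term is understood as multiplied by the identity $\delta^a_b$. Thus $T^a{}_b\{A,B\}=A^{ac_2\dots c_p}B_{bc_2\dots c_p}-\frac{1}{2p}A^{c_1\dots c_p}B_{c_1\dots c_p}\delta^a_b$ (the ''superenergy tensor'' of $A,B$). A $p$-form $A$ is simple if $A^{a_1\dots a_p}=u^{[a_1}\cdots w^{a_p]}$ for some vectors $u,\dots,w$. No metric is assumed. *)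

(* Defs.v *)
From HB Require Import structures.
From mathcomp Require Import all_boot all_order all_algebra all_fingroup.
Set Implicit Arguments. Unset Strict Implicit. Unset Printing Implicit Defensive.
Import GRing.Theory.
Local Open Scope ring_scope.

Definition pform (F : Type) (n p : nat) := p.-tuple 'I_n -> F.

Definition alternating (F : fieldType) (n p : nat) (A : pform F n p) : Prop :=
  forall (s : 'S_p) (t : p.-tuple 'I_n),
    A [tuple tnth t (s i) | i < p] = (-1) ^+ s * A t.

(* Simple: A^{a1..ap} = u_1^{[a1} ... u_p^{ap]} (antisymmetrization with 1/p!). *)
Definition simple_form (F : fieldType) (n p : nat) (A : pform F n p) : Prop :=
  exists u : 'I_p -> 'I_n -> F,
    forall t : p.-tuple 'I_n,
      A t = (p`!%:R)^-1 *
            \sum_(s : 'S_p) (-1) ^+ s * \prod_(i < p) u i (tnth t (s i)).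

Definition Pmx (F : fieldType) (n q : nat) (A B : pform F n q.+1) : 'M[F]_n :=
  \matrix_(a, b) \sum_(c : q.-tuple 'I_n)
     A [tuple of a :: c] * B [tuple of b :: c].

Definition Tmx (F : fieldType) (n q : nat) (A B : pform F n q.+1) : 'M[F]_n :=
  Pmx A B - ((2 * q.+1)%:R^-1 * \tr (Pmx A B))%:M.

(* Main.v *)
Require Import Defs.
From HB Require Import structures.
From mathcomp Require Import all_boot all_order all_algebra all_fingroup.
Set Implicit Arguments. Unset Strict Implicit. Unset Printing Implicit Defensive.
Import GRing.Theory.
Local Open Scope ring_scope.

Lemma tnth_cons0 (T : Type) q (x : T) (c : q.-tuple T) :
  tnth [tuple of x :: c] ord0 = x.
Proof. by []. Qed.

Lemma tnth_consS (T : Type) q (x : T) (c : q.-tuple T) (l : 'I_q) :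
  tnth [tuple of x :: c] (lift ord0 l) = tnth c l.
Proof. by rewrite (tnth_nth x) /= (tnth_nth x). Qed.

Lemma sum_cons (R : nmodType) (T : finType) q (f : q.+1.-tuple T -> R) :
  \sum_t f t = \sum_x \sum_(c : q.-tuple T) f [tuple of x :: c].
Proof.
rewrite pair_big /=.
pose h (pr : T * q.-tuple T) : q.+1.-tuple T := [tuple of pr.1 :: pr.2].
pose g (t : q.+1.-tuple T) : T * q.-tuple T := (thead t, [tuple of behead t]).
rewrite (reindex h) //=.
exists g => [[x c] _|t _].
  by rewrite /g /h /=; congr pair; apply: val_inj.
rewrite /g /h /=; apply: val_inj => /=.
by case: t => [[|y s] //= _].
Qed.

Section G.
Variable F : fieldType.

Lemma G0 m n (f : m.-tuple 'I_n -> F)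
  (hf : forall (s : 'S_m) t, f [tuple tnth t (s i) | i < m] = (-1) ^+ s * f t)
  (V : 'I_m -> 'I_n -> F) (s : 'S_m) :
  \sum_c (\prod_l V l (tnth c (s l))) * f c
  = (-1) ^+ s * \sum_c (\prod_l V l (tnth c l)) * f c.
Proof.
pose h (d : m.-tuple 'I_n) := [tuple tnth d ((s^-1)%g i) | i < m].
have hinj : injective h.
  move=> d1 d2 E; apply: eq_from_tnth => j.
  have := congr1 (fun t => tnth t (s j)) E.
  by rewrite /h !tnth_mktuple permK.
rewrite (reindex_inj hinj) mulr_sumr; apply: eq_bigr => d _.
rewrite /h hf odd_permV.
have -> : \prod_l V l (tnth [tuple tnth d ((s^-1)%g i) | i < m] (s l))
          = \prod_l V l (tnth d l).
  by apply: eq_bigr => l _; rewrite tnth_mktuple permK.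
by rewrite mulrCA.
Qed.

Definition Bm m n (B : m.-tuple 'I_n -> F) (W : 'I_m -> 'I_n -> F) :=
  \sum_t (\prod_j W j (tnth t j)) * B t.

Lemma BmP m n (B : m.-tuple 'I_n -> F)
  (hf : forall (s : 'S_m) t, B [tuple tnth t (s i) | i < m] = (-1) ^+ s * B t)
  (W : 'I_m -> 'I_n -> F) (s : 'S_m) :
  Bm B (fun j => W (s j)) = (-1) ^+ s * Bm B W.
Proof.
rewrite /Bm.
have -> : \sum_t (\prod_j W (s j) (tnth t j)) * B t
  = \sum_t (\prod_j W j (tnth t ((s^-1)%g j))) * B t.
  apply: eq_bigr => t _; congr (_ * _).
  rewrite (reindex_inj (@perm_inj _ (s^-1)%g)) /=.
  by apply: eq_bigr => j _; rewrite permKV.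
by rewrite (G0 hf) odd_permV.
Qed.

Lemma Bm0 m n (B : m.-tuple 'I_n -> F) (hF : [pchar F] =i pred0)
  (hf : forall (s : 'S_m) t, B [tuple tnth t (s i) | i < m] = (-1) ^+ s * B t)
  (W : 'I_m -> 'I_n -> F) (i k : 'I_m) :
  i != k -> W i = W k -> Bm B W = 0.
Proof.
move=> nik Wik.
have := BmP hf W (tperm i k).
have -> : Bm B (fun j => W (tperm i k j)) = Bm B W.
  rewrite /Bm; apply: eq_bigr => t _; congr (_ * _); apply: eq_bigr => j _.
  by case: tpermP => [->|->|] //; rewrite Wik.
rewrite odd_tperm nik expr1 mulN1r => /eqP.
rewrite -subr_eq0 opprK -mulr2n -mulr_natr mulf_eq0 => /orP[/eqP //|].
by move/(pcharf0P F): hF => ->.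
Qed.
End G.

From mathcomp Require Import ring.

Lemma core (F : fieldType) (hF : [pchar F] =i pred0) (n q : nat)
    (A B : pform F n q.+1)
    (hB : alternating B) (hAs : simple_form A) :
  exists lam, Pmx A B *m Pmx A B = lam *: Pmx A B /\
              \tr (Pmx A B) = q.+1%:R * lam.
Proof.
case: hAs => u hu.
set c0 := ((q.+1)`!%:R : F)^-1.
pose Q (i : 'I_q.+1) (c : q.-tuple 'I_n) :=
  (-1) ^+ i * \det (\matrix_(l, m) u (lift i l) (tnth c m)) : F.
pose beta i b := c0 * \sum_c Q i c * B [tuple of b :: c].
have hA1 : forall (a : 'I_n) (c : q.-tuple 'I_n), A [tuple of a :: c] = c0 * \sum_i u i a * Q i c.
  move=> a c; rewrite hu; congr (_ * _).
  transitivity (\det (\matrix_(i, j) u i (tnth [tuple of a :: c] j))).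
    by rewrite /determinant; apply: eq_bigr => s _; congr (_ * _);
      apply: eq_bigr => i _; rewrite mxE.
  rewrite (expand_det_col _ ord0); apply: eq_bigr => i _.
  rewrite mxE tnth_cons0 /cofactor addn0; congr (_ * (_ * _)).
  by congr (\det _); apply/matrixP => l m; rewrite !mxE tnth_consS.
have hP : forall a b : 'I_n, Pmx A B a b = \sum_i u i a * beta i b.
  move=> a b; rewrite /Pmx mxE /beta.
  under [RHS]eq_bigr do rewrite mulr_sumr mulr_sumr.
  rewrite exchange_big; apply: eq_bigr => c _.
  rewrite hA1 mulr_sumr mulr_suml; apply: eq_bigr => i _.
  ring.
pose G i k := \sum_x beta i x * u k x.
have hBx : forall (x : 'I_n) (s : 'S_q) (c : q.-tuple 'I_n),
    B [tuple of x :: [tuple tnth c (s i) | i < q]] = (-1) ^+ s * B [tuple of x :: c].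
  move=> x s c; have := hB (lift_perm ord0 ord0 s) [tuple of x :: c].
  rewrite odd_lift_perm /= => <-; congr B; apply: eq_from_tnth => j.
  case: (unliftP ord0 j) => [l ->|->].
    by rewrite tnth_mktuple lift_perm_lift tnth_consS tnth_consS tnth_mktuple.
  by rewrite tnth_mktuple lift_perm_id.
have hS : forall i (x : 'I_n), \sum_c Q i c * B [tuple of x :: c] =
   (-1) ^+ i * (q`!%:R * \sum_c (\prod_l u (lift i l) (tnth c l)) * B [tuple of x :: c]).
  move=> i x.
  under eq_bigr => c _ do rewrite /Q /determinant -mulrA mulr_suml.
  rewrite -mulr_sumr exchange_big /=; congr (_ * _).
  transitivity (\sum_(s : 'S_q) \sum_c (\prod_l u (lift i l) (tnth c l)) * B [tuple of x :: c]).
    apply: eq_bigr => s _.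
    under eq_bigr => c _ do rewrite -mulrA.
    rewrite -mulr_sumr.
    under eq_bigr => c _ do under eq_bigr => l _ do rewrite mxE.
    have h := @G0 F q n (fun c => B [tuple of x :: c]) (hBx x) (fun l => u (lift i l)) s.
    simpl in h; rewrite h mulrA -signr_addb addbb expr0 mul1r //.
  by rewrite sumr_const card_Sn mulr_natl.
set lam := c0 * q`!%:R * Bm B u.
have hG : forall i k, G i k = (i == k)%:R * lam.
  move=> i k.
  pose U' := fun j => if j == i then u k else u j.
  have hs := BmP hB U' (lift_perm ord0 i 1).
  rewrite odd_lift_perm /= odd_perm1 addbF in hs.
  have h2 : Bm B (fun j => U' (lift_perm ord0 i 1 j)) =
     \sum_x \sum_c (u k x * \prod_l u (lift i l) (tnth c l)) * B [tuple of x :: c].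
    rewrite /Bm sum_cons; apply: eq_bigr => x _; apply: eq_bigr => c _.
    congr (_ * _); rewrite big_ord_recl tnth_cons0 lift_perm_id /U' eqxx.
    congr (_ * _); apply: eq_bigr => l _.
    by rewrite lift_perm_lift tnth_consS perm1 eq_sym (negbTE (neq_lift i l)).
  have h3 : G i k = c0 * (-1) ^+ i * q`!%:R *
     \sum_x \sum_c (u k x * \prod_l u (lift i l) (tnth c l)) * B [tuple of x :: c].
    rewrite /G /beta mulr_sumr; apply: eq_bigr => x _.
    rewrite hS !mulr_sumr mulr_suml; apply: eq_bigr => c _; ring.
  rewrite h3 -h2 hs signr_odd.
  have -> : c0 * (-1) ^+ i * q`!%:R * ((-1) ^+ i * Bm B U') =
            ((-1) ^+ i * (-1) ^+ i) * (c0 * q`!%:R * Bm B U') by ring.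
  rewrite -exprD -signr_odd oddD addbb expr0 mul1r /lam.
  case: eqP => [ik|/eqP nik].
    rewrite mul1r; congr (_ * _); rewrite /Bm; apply: eq_bigr => t _; subst k.
    by congr (_ * _); apply: eq_bigr => j _; rewrite /U'; case: eqP => [->|].
  by rewrite mul0r (Bm0 hF hB nik) ?mulr0 // /U' eqxx eq_sym (negbTE nik).
exists lam; split.
  apply/matrixP => a b; rewrite [RHS]mxE [LHS]mxE hP mulr_sumr.
  under eq_bigr => x _ do rewrite !hP mulr_suml.
  rewrite exchange_big; apply: eq_bigr => i _ /=.
  under eq_bigr => x _ do rewrite mulr_sumr.
  rewrite exchange_big /=.
  have -> : \sum_k \sum_x u i a * beta i x * (u k x * beta k b)
     = \sum_k u i a * G i k * beta k b.
    apply: eq_bigr => k _; rewrite /G mulr_sumr mulr_suml; apply: eq_bigr => x _; by rewrite !mulrA.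
  rewrite (bigD1 i) //= big1 ?addr0; first by rewrite hG eqxx /= mul1r; ring.
  by move=> k nki; rewrite hG eq_sym (negbTE nki) mul0r mulr0 mul0r.
rewrite /mxtrace.
under eq_bigr => a _ do rewrite hP.
rewrite exchange_big /=.
transitivity (\sum_(i < q.+1) G i i).
  by apply: eq_bigr => i _; apply: eq_bigr => x _; rewrite mulrC.
under eq_bigr => i _ do rewrite hG eqxx /= mul1r.
by rewrite sumr_const card_ord mulr_natl.
Qed.
Unset Implicit Arguments.
Theorem theorem3 (F : fieldType) (hF : [pchar F] =i pred0) (n q : nat)
    (A B : pform F n q.+1)
    (hA : alternating A) (hB : alternating B) (hAs : simple_form A) :
  let P := Pmx A B in
  let T := Tmx A B in
  T *m T = (((2 * q.+1)%:R ^+ 2)^-1 * \tr P ^+ 2)%:M /\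
  (n != (2 * q.+1)%N ->
   T *m T = (((n%:R - (2 * q.+1)%:R) ^+ 2)^-1 * \tr T ^+ 2)%:M).
Proof.
move=> P T.
have [lam [hPP htr]] := core hF hB hAs.
have nz : forall m, (m%:R == 0 :> F) = (m == 0)%N by move/(pcharf0P F): hF.
have hp : (2 * q.+1)%:R != 0 :> F by rewrite nz.
have hq : q.+1%:R != 0 :> F by rewrite nz.
have h2 : 2%:R != 0 :> F by rewrite nz.
have hq' : 1 + q%:R != 0 :> F by rewrite -natr1 addrC in hq.
set p := (2 * q.+1)%:R : F.
set c := p^-1 * \tr P.
have hT : T = P - c%:M by [].
have hc : lam - c - c = 0.
  rewrite /c /P htr /p natrM; field.
  by rewrite hq' h2.
have hTT : T *m T = (c * c)%:M.
  rewrite hT mulmxBl !mulmxBr mul_mx_scalar mul_scalar_mx -/P hPP -scalar_mxM.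
  by rewrite opprB addrA addrAC -!scalerBl hc scale0r add0r.
have e1 : c * c = (p ^+ 2)^-1 * \tr P ^+ 2.
  by rewrite /c; field; rewrite hq' h2.
split; first by rewrite hTT e1.
move=> hn.
have hnp : n%:R - p != 0.
  rewrite /p; case: (ltngtP n (2 * q.+1)) hn => h hn'; last by move: hn'; rewrite ?h ?eqxx.
    by rewrite -opprB -natrB ?(ltnW h) // oppr_eq0 nz subn_eq0 -ltnNge h.
  by rewrite -natrB ?(ltnW h) // nz subn_eq0 -ltnNge h.
have trT : \tr T = \tr P - c * n%:R.
  by rewrite hT raddfB /= mxtrace_scalar mulr_natr.
rewrite hTT trT /c; congr (_%:M); have hp' : p != 0 by exact: hp.
clearbody p; field.
by rewrite hnp hp'.
Qed.
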